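(* Let $f(z)=z+\sum_{k=2}^{\infty}a_kz^k$ be analytic in $\mathbb{D}=\{z:|z|<1\}$ with $zf'(z)-f(z)=\frac12 z^2\phi(z)$ for all $z\in\mathbb{D}$, where $\phi$ is analytic in $\mathbb{D}$ and $|\phi(z)|\le1$. Let $r_{\mathcal S^*}$ denote the positive root (in $(0,1)$) of \[3(1-r)(2-r)\ln(1-r)+4-4r-3r^2+2r^3=0.\] Then for every $n\ge2$ the partial sum $s_n(z;f)=z+\sum_{k=2}^n a_kz^k$ is starlike in the disk $|z|<r_{\mathcal S^*}$.
   Context: A normalized analytic function $g$ is starlike in a disk $|z|<\rho$ if it maps it conformally onto a domain starlike with respect to $0$; equivalently $\mathrm{Re}(zg'(z)/g(z))>0$ for $0<|z|<\rho$. *)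

(* Defs.v *)
From Stdlib Require Import Reals.
From Coquelicot Require Import Coquelicot.
Open Scope R_scope.

Definition in_disk (rho : R) (z : C) : Prop := Cmod z < rho.

(** g is analytic (complex differentiable) at every point of |z| < rho.
    [is_derive] on functions C -> C uses C as a normed module over itself,
    i.e. this is the complex derivative. *)
Definition holomorphic_on_disk (rho : R) (g : C -> C) : Prop :=
  forall z : C, in_disk rho z -> ex_derive g z.

Definition starlike_in_disk (rho : R) (g : C -> C) : Prop :=
  holomorphic_on_disk rho g /\
  forall z : C, 0 < Cmod z -> Cmod z < rho ->
    g z <> 0%C /\
    forall g' : C, is_derive g z g' -> 0 < Re (z * g' / g z)%C.

Definition partial_sum (a : nat -> C) (n : nat) (z : C) : C :=
  (z + sum_n_m (fun k => a k * pow_n z k) 2 n)%C.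

Definition rS_equation (r : R) : R :=
  3 * (1 - r) * (2 - r) * ln (1 - r) + 4 - 4 * r - 3 * r ^ 2 + 2 * r ^ 3.

(* Main.v *)
Require Import Defs.
From Stdlib Require Import Reals Lra Psatz Lia ZArith.
From Coquelicot Require Import Coquelicot.
Open Scope R_scope.

Ltac cring := match goal with |- ?a = ?b => change (@eq C a b) end; ring.

Lemma ln_bound4 (x : R) : 0 <= x < 1 ->
  ln (1 - x) <= - (x + x^2/2 + x^3/3 + x^4/4).
Proof.
  intros [H0 H1].
  set (h := fun t => ln (1 - t) + (t + t^2/2 + t^3/3 + t^4/4)).
  assert (Hd : forall t, t < 1 -> is_derive h t (- t^4 / (1 - t))).
  { intros t Ht. unfold h. auto_derive. lra. field. lra. }
  destruct (Req_dec x 0) as [->|Hx].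
  { replace (1-0) with 1 by lra. rewrite ln_1. lra. }
  destruct (MVT_gen h 0 x (fun t => - t^4/(1-t))) as [c [Hc Hm]].
  - intros t Ht. apply Hd. rewrite Rmax_right in Ht by lra. lra.
  - intros t Ht. rewrite Rmax_right in Ht by lra.
    apply continuity_pt_filterlim. apply (ex_derive_continuous (K:=R_AbsRing) (V:=R_NormedModule)).
    eexists. apply Hd. lra.
  - rewrite Rmin_left in Hc by lra. rewrite Rmax_right in Hc by lra.
    assert (h 0 = 0) as H00. { unfold h. replace (1-0) with 1 by lra. rewrite ln_1. field. }
    rewrite H00 in Hm.
    assert (0 <= c^4 / (1 - c)). { apply Rdiv_le_0_compat. apply pow_le; lra. lra. }
    assert (h x <= 0). { rewrite Rminus_0_r in Hm. rewrite Hm. 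
      replace (- c ^ 4 / (1 - c)) with (- (c^4/(1-c))) by (field; lra). nra. }
    unfold h in H2. lra.
Qed.

Lemma poly_u (u : R) : 0 < u <= 1/2 ->
 -1 - 9/4*u + 35/4*u^2 + u^3 - 5*u^4 + 13/4*u^5 - 3/4*u^6 < 0.
Proof. intros [H0 H1].
assert (0 <= u * (1/2 - u)) by nra.
assert (0 <= u^2 * (1/2 - u)) by (apply Rmult_le_pos; nra).
assert (0 <= u^3 * (1/2 - u)) by (apply Rmult_le_pos; [apply pow_le|]; nra).
assert (0 <= u^4 * (1/2 - u)) by (apply Rmult_le_pos; [apply pow_le|]; nra).
assert (0 <= u^5 * (1/2 - u)) by (apply Rmult_le_pos; [apply pow_le|]; nra).
nra.
Qed.

Lemma poly_neg (r : R) : 1/2 <= r < 1 ->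
  3 * (1 - r) * (2 - r) * (- (r + r^2/2 + r^3/3 + r^4/4)) + 4 - 4 * r - 3 * r ^ 2 + 2 * r ^ 3 < 0.
Proof.
  intros [H0 H1].
  pose proof (poly_u (1 - r) ltac:(lra)) as H.
  match goal with |- ?a < 0 => replace a with (-1 - 9/4*(1-r) + 35/4*(1-r)^2 + (1-r)^3 - 5*(1-r)^4 + 13/4*(1-r)^5 - 3/4*(1-r)^6) by field end.
  exact H.
Qed.

Lemma root_lt_half (r : R) : 0 < r < 1 -> rS_equation r = 0 -> r < 1/2.
Proof.
  intros Hr Heq. destruct (Rlt_le_dec r (1/2)) as [H|H]; [exact H|].
  exfalso. unfold rS_equation in Heq.
  pose proof (ln_bound4 r ltac:(lra)) as Hl.
  pose proof (poly_neg r ltac:(lra)) as Hp.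
  assert (0 < 3 * (1 - r) * (2 - r)) by nra.
  assert (3 * (1 - r) * (2 - r) * ln (1 - r) <= 3 * (1 - r) * (2 - r) * (- (r + r^2/2 + r^3/3 + r^4/4))).
  { apply Rmult_le_compat_l; lra. }
  lra.
Qed.

Lemma Cmod_pow_n (z : C) (k : nat) : Cmod (pow_n z k) = Cmod z ^ k.
Proof.
  induction k as [|k IH]; simpl.
  - apply Cmod_1.
  - change (mult z (pow_n z k)) with (z * pow_n z k)%C. rewrite Cmod_mult, IH. reflexivity.
Qed.

Lemma sum_geom_eq (s : R) (K : nat) : s <> 1 ->
  sum_n (fun k => s ^ k) K = (1 - s ^ (S K)) / (1 - s).
Proof.
  intros Hs. assert (1 - s <> 0) by lra.
  induction K as [|K IH].
  - rewrite sum_O. simpl. field. auto.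
  - rewrite sum_Sn, IH. change plus with Rplus. simpl. field. auto.
Qed.

Lemma sum_geom_bound (s : R) (K : nat) : 0 <= s < 1 ->
  sum_n (fun k => s ^ k) K <= 1 / (1 - s).
Proof.
  intros Hs. rewrite sum_geom_eq by lra.
  apply Rmult_le_compat_r. apply Rlt_le, Rinv_0_lt_compat; lra.
  pose proof (pow_le s (S K) ltac:(lra)). lra.
Qed.

Lemma kpow_bound (s : R) (k : nat) : 0 <= s < 1 ->
  INR (S k) * s ^ k <= 1 / (1 - s).
Proof.
  intros Hs.
  assert (H : INR (S k) * s ^ k + s ^ (S k) / (1 - s) <= 1 / (1 - s)).
  { induction k as [|k IH].
    - simpl. apply Req_le. field. lra.
    - assert (E : INR (S (S k)) * s ^ S k + s ^ S (S k) / (1 - s) =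
         INR (S k) * s ^ k + s ^ (S k) / (1 - s) + INR (S k) * s^k * (s - 1)).
      { rewrite S_INR. simpl. field. lra. }
      rewrite E.
      assert (0 <= INR (S k) * s^k) by (apply Rmult_le_pos; [apply pos_INR|apply pow_le; lra]).
      nra. }
  assert (0 <= s ^ (S k) / (1 - s)).
  { apply Rdiv_le_0_compat. apply pow_le; lra. lra. }
  lra.
Qed.

Lemma Cmod_normC (x : C) : Cmod x = @norm C_AbsRing C_NormedModule x.
Proof. reflexivity. Qed.

Lemma norm_sum_n_C (d : nat -> C) (K : nat) :
  Cmod (sum_n d K) <= sum_n (fun k => Cmod (d k)) K.
Proof.
  rewrite Cmod_normC. unfold sum_n.
  eapply Rle_trans. apply (norm_sum_n_m (K := C_AbsRing) d 0 K).
  apply Req_le. apply sum_n_m_ext. intros; reflexivity.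
Qed.

Lemma series_bound (d : nat -> C) (L : C) (B : R) :
  is_series d L -> (forall K, Cmod (sum_n d K) <= B) -> Cmod L <= B.
Proof.
  intros Hs HB.
  assert (Hl : is_lim_seq (fun K => Cmod (sum_n d K)) (Cmod L)).
  { unfold is_lim_seq. 
    eapply filterlim_ext. intros K. symmetry. apply Cmod_normC.
    rewrite Cmod_normC.
    eapply filterlim_comp. apply Hs. apply filterlim_norm. }
  assert (Hc : is_lim_seq (fun _ : nat => B) B) by apply is_lim_seq_const.
  pose proof (is_lim_seq_le _ _ _ _ HB Hl Hc). simpl in H. exact H.
Qed.

Lemma terms_bounded (d : nat -> C) (L : C) :
  is_series d L -> exists B, forall k, Cmod (d k) <= B.
Proof.
  intros Hs.
  destruct (filterlim_bounded (K := C_AbsRing) (sum_n d)) as [M HM].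
  { exists L. exact Hs. }
  exists (2 * M). intros k. destruct k as [|k].
  - pose proof (HM 0%nat). rewrite sum_O in H. rewrite Cmod_normC.
    pose proof (norm_ge_0 (d 0%nat)). lra.
  - assert (E : d (S k) = (sum_n d (S k) - sum_n d k)%C).
    { rewrite sum_Sn. change plus with Cplus. ring. }
    rewrite E. unfold Cminus. eapply Rle_trans. apply Cmod_triangle.
    rewrite Cmod_opp. rewrite (Cmod_normC (sum_n d (S k))), (Cmod_normC (sum_n d k)). pose proof (HM (S k)). pose proof (HM k). lra.
Qed.

Definition Eterm (y z : C) (k : nat) : C :=
  (pow_n y (S k) - pow_n z (S k) - RtoC (INR (S k)) * pow_n z k * (y - z))%C.

Lemma Eterm_rec (y z : C) (k : nat) :
  Eterm y z (S k) = (y * Eterm y z k + RtoC (INR (S k)) * pow_n z k * ((y - z) * (y - z)))%C.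
Proof.
  unfold Eterm. change (pow_n y (S (S k))) with (y * pow_n y (S k))%C.
  change (pow_n z (S (S k))) with (z * pow_n z (S k))%C.
  change (pow_n y (S k)) with (y * pow_n y k)%C.
  change (pow_n z (S k)) with (z * pow_n z k)%C.
  rewrite (S_INR (S k)). rewrite RtoC_plus. ring.
Qed.

Lemma Eterm_bound (y z : C) (rho : R) (k : nat) : 0 < rho -> Cmod y <= rho -> Cmod z <= rho ->
  rho * Cmod (Eterm y z k) <= INR k ^ 2 * rho ^ k * Cmod (y - z) ^ 2.
Proof.
  intros Hr Hy Hz. induction k as [|k IH].
  - assert (E0 : Eterm y z 0 = RtoC 0).
    { unfold Eterm. simpl. change (mult y one) with (y * 1)%C. change (mult z one) with (z * 1)%C.
      change one with (RtoC 1). ring. }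
    rewrite E0, Cmod_0. simpl. lra.
  - rewrite Eterm_rec.
    set (u := Cmod (y - z)).
    assert (Hu : 0 <= u) by apply Cmod_ge_0.
    assert (H1 : Cmod (y * Eterm y z k + RtoC (INR (S k)) * pow_n z k * ((y - z) * (y - z)))%C
              <= Cmod y * Cmod (Eterm y z k) + INR (S k) * Cmod z ^ k * (u * u)).
    { eapply Rle_trans. apply Cmod_triangle. rewrite !Cmod_mult, Cmod_R, Cmod_pow_n.
      rewrite Rabs_pos_eq by apply pos_INR. fold u. lra. }
    assert (H2 : Cmod z ^ k <= rho ^ k) by (apply pow_incr; split; [apply Cmod_ge_0|lra]).
    assert (HE : 0 <= Cmod (Eterm y z k)) by apply Cmod_ge_0.
    assert (Hk : 0 <= INR k) by apply pos_INR.
    assert (Hrk : 0 <= rho ^ k) by (apply pow_le; lra).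
    rewrite S_INR in *. simpl.
    assert (rho * (Cmod y * Cmod (Eterm y z k)) <= rho * (rho * Cmod (Eterm y z k))).
    { apply Rmult_le_compat_l. lra. apply Rmult_le_compat_r; lra. }
    assert ((INR k + 1) * Cmod z ^ k * (u*u) <= (INR k + 1) * rho ^ k * (u*u)).
    { apply Rmult_le_compat_r. nra. apply Rmult_le_compat_l; lra. }
    assert (rho * (rho * Cmod (Eterm y z k)) <= rho * (INR k ^ 2 * rho ^ k * u ^ 2)).
    { apply Rmult_le_compat_l. lra. exact IH. }
    assert (0 <= rho * rho ^ k * (u * u)) by (apply Rmult_le_pos; nra).
    nra.
Qed.

Lemma coef_bound_aux (A B rp s t : R) (k : nat) :
  0 < rp -> 0 <= s < 1 -> 0 <= t <= rp * s ^ 3 -> 0 <= A -> A * rp ^ (S k) <= B ->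
  INR (S k) ^ 2 * A * t ^ k <= (B / rp) / (1 - s) ^ 2 * s ^ k.
Proof.
  intros Hrp Hs Ht HA HB.
  pose proof (kpow_bound s k Hs) as Hk.
  assert (Hrpk : 0 < rp ^ k) by (apply pow_lt; lra).
  assert (HA' : A <= B / rp / rp ^ k).
  { simpl in HB. apply (Rmult_le_reg_r (rp * rp ^ k)). nra.
    replace (B / rp / rp ^ k * (rp * rp ^ k)) with B by (field; lra). lra. }
  assert (Htk : t ^ k <= rp ^ k * s ^ k * s ^ k * s ^ k).
  { replace (rp ^ k * s ^ k * s ^ k * s ^ k) with ((rp * s^3) ^ k).
    apply pow_incr; lra. rewrite <- !Rpow_mult_distr. f_equal. ring. }
  assert (0 <= t ^ k) by (apply pow_le; lra).
  assert (0 <= s ^ k) by (apply pow_le; lra).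
  assert (0 <= INR (S k) ^ 2) by (apply pow_le, pos_INR).
  assert (HB0 : 0 <= B). { assert (0 <= A * rp ^ S k) by (apply Rmult_le_pos; [lra| apply pow_le; lra]). lra. }
  apply Rle_trans with (INR (S k) ^ 2 * (B / rp / rp ^ k) * (rp ^ k * s ^ k * s ^ k * s ^ k)).
  { apply Rmult_le_compat. nra. lra. apply Rmult_le_compat_l. lra. lra. lra. }
  replace (INR (S k) ^ 2 * (B / rp / rp ^ k) * (rp ^ k * s ^ k * s ^ k * s ^ k))
    with ((B / rp) * (INR (S k) * s ^ k) ^ 2 * s ^ k) by (field; lra).
  replace ((B / rp) / (1 - s) ^ 2 * s ^ k) with ((B / rp) * (1 / (1 - s)) ^ 2 * s ^ k) by (field; lra).
  apply Rmult_le_compat_r. lra. apply Rmult_le_compat_l. apply Rdiv_le_0_compat; lra.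
  assert (0 <= INR (S k) * s ^ k) by (apply Rmult_le_pos; [apply pos_INR|lra]).
  apply pow_incr. lra.
Qed.

Lemma Eterm_eq (y z c : C) (k : nat) :
  ((pow_n y (S k) * c - pow_n z (S k) * c) - (y - z) * (pow_n z k * (RtoC (INR (S k)) * c)))%C
  = (c * Eterm y z k)%C.
Proof. unfold Eterm. ring. Qed.

Lemma pseries_deriv (a : nat -> C) (F : C -> C) :
  (forall w, Cmod w < 1 -> is_pseries a w (F w)) ->
  forall z, Cmod z < 1 ->
  exists l, is_pseries (fun k => RtoC (INR (S k)) * a (S k))%C z l /\ is_derive F z l.
Proof.
  intros Hser z Hz.
  pose proof (Cmod_ge_0 z) as Hz0.
  set (rp := (1 + Cmod z) / 2).
  assert (Hrp : 0 < rp < 1) by (unfold rp; lra).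
  set (x := Cmod z / rp).
  assert (Hx : 0 <= x < 1).
  { unfold x. split. apply Rdiv_le_0_compat; lra.
    apply (Rmult_lt_reg_r rp). lra. field_simplify; unfold rp; lra. }
  set (s := (2 + x) / 3).
  assert (Hs : 0 <= s < 1) by (unfold s; lra).
  set (rho := rp * s ^ 3).
  assert (Hrho : Cmod z < rho).
  { unfold rho. assert (E3 : s ^ 3 - x = (1 - x) ^ 2 * (x + 8) / 27) by (unfold s; field).
    assert (0 < (1 - x) ^ 2 * (x + 8) / 27).
    { apply Rdiv_lt_0_compat; [apply Rmult_lt_0_compat; [apply pow_lt|]|]; lra. }
    assert (x < s ^ 3) by lra.
    assert (Cmod z = rp * x) by (unfold x; field; lra). nra. }
  assert (Hrho1 : rho <= rp).
  { unfold rho. assert (s ^ 3 <= 1) by (simpl; nra). nra. }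
  destruct (terms_bounded _ _ (Hser (RtoC rp) ltac:(rewrite Cmod_R, Rabs_pos_eq; lra))) as [B HB].
  assert (HaB : forall k, Cmod (a k) * rp ^ k <= B).
  { intros k. specialize (HB k). change (scal (pow_n (RtoC rp) k) (a k)) with (pow_n (RtoC rp) k * a k)%C in HB.
    rewrite Cmod_mult, Cmod_pow_n, Cmod_R, Rabs_pos_eq in HB by lra. lra. }
  set (C0 := (B / rp) / (1 - s) ^ 2).
  assert (HC0 : forall k t, 0 <= t <= rho -> INR (S k) ^ 2 * Cmod (a (S k)) * t ^ k <= C0 * s ^ k).
  { intros k t Ht. apply coef_bound_aux; [lra|lra| unfold rho in Ht; lra | apply Cmod_ge_0 | apply HaB]. }
  assert (HC0pos : 0 <= C0).
  { pose proof (HC0 0%nat 0 ltac:(lra)). simpl in H. 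
    assert (0 <= INR 1 ^ 2 * Cmod (a 1%nat) * 1) by (pose proof (Cmod_ge_0 (a 1%nat)); simpl; nra).
    simpl in H0. lra. }
  assert (Hex : ex_series (fun k => scal (pow_n z k) (RtoC (INR (S k)) * a (S k))%C)).
  { apply (ex_series_le (K := C_AbsRing) (V := C_CompleteNormedModule)) with (b := fun k => C0 * s ^ k).
    - intros k. rewrite <- Cmod_normC.
      change (scal (pow_n z k) (RtoC (INR (S k)) * a (S k))%C) with (pow_n z k * (RtoC (INR (S k)) * a (S k)))%C.
      rewrite !Cmod_mult, Cmod_pow_n, Cmod_R, Rabs_pos_eq by apply pos_INR.
      eapply Rle_trans; [|apply (HC0 k (Cmod z)); lra].
      assert (1 <= INR (S k)) by (rewrite S_INR; pose proof (pos_INR k); lra).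
      assert (0 <= Cmod (a (S k)) * Cmod z ^ k) by (apply Rmult_le_pos; [apply Cmod_ge_0|apply pow_le; lra]).
      set (n := INR (S k)) in *. replace (n ^ 2) with (n * n) by ring. assert (0 <= (n - 1) * (Cmod (a (S k)) * Cmod z ^ k)) by (apply Rmult_le_pos; lra). assert (0 <= n * ((n - 1) * (Cmod (a (S k)) * Cmod z ^ k))) by (apply Rmult_le_pos; lra). nra.
    - exists (scal C0 (/ (1 - s))). apply (is_series_scal (K := R_AbsRing) (V := R_NormedModule) C0 (fun k => s ^ k)). apply is_series_geom. rewrite Rabs_pos_eq; lra. }
  destruct Hex as [l Hl].
  exists l. split. exact Hl.
  split. apply is_linear_scal_l.
  intros x0 Hx0. apply (is_filter_lim_locally_unique (K := C_AbsRing) (V := AbsRing_NormedModule C_AbsRing)) in Hx0. subst x0.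
  intros eps.
  assert (Hd : 0 < Rmin (rho - Cmod z) (eps * rho * (1 - s) / (C0 + 1))).
  { apply Rmin_pos. lra. assert (0 < rho) by lra. pose proof (cond_pos eps).
    apply Rdiv_lt_0_compat. apply Rmult_lt_0_compat; [nra|lra]. lra. }
  exists (mkposreal _ Hd). intros y Hy.
  change (Cmod (y - z)%C < Rmin (rho - Cmod z) (eps * rho * (1 - s) / (C0 + 1))) in Hy.
  change (minus y z) with (y - z)%C in *.
  set (u := (y - z)%C) in *.
  assert (Hu1 : Cmod u < rho - Cmod z) by (eapply Rlt_le_trans; [exact Hy| apply Rmin_l]).
  assert (Hu2 : Cmod u <= eps * rho * (1 - s) / (C0 + 1)) by (left; eapply Rlt_le_trans; [exact Hy| apply Rmin_r]).
  assert (Hyr : Cmod y <= rho).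
  { replace y with (z + u)%C by (unfold u; ring). pose proof (Cmod_triangle z u). lra. }
  pose proof (Hser y ltac:(lra)) as Hy'. pose proof (Hser z ltac:(lra)) as Hz'.
  pose proof (is_series_minus _ _ _ _ Hy' Hz') as Hm.
  assert (Hm1 : is_series (fun k => (pow_n y (S k) * a (S k) - pow_n z (S k) * a (S k))%C) (F y - F z)%C).
  { apply (is_series_incr_1 (K := C_AbsRing) (V := C_NormedModule) (fun k => (pow_n y k * a k - pow_n z k * a k)%C)).
    replace (plus (F y - F z)%C _) with (plus (F y) (opp (F z))).
    exact Hm. simpl. change (mult one (a 0%nat)) with (1 * a 0%nat)%C.
    change (plus (F y) (opp (F z))) with (F y + - F z)%C.
    change (plus (F y - F z)%C (1 * a 0%nat - 1 * a 0%nat)%C) with ((F y - F z) + ((1 * a 0%nat) - (1 * a 0%nat)))%C.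
    apply injective_projections; simpl; ring. }
  pose proof (is_series_scal (K := C_AbsRing) u _ _ Hl) as Hls.
  pose proof (is_series_minus _ _ _ _ Hm1 Hls) as Hdiff.
  rewrite <- Cmod_normC.
  change (minus (minus (F y) (F z)) (scal u l)) with (plus (F y - F z)%C (opp (scal u l))).
  eapply series_bound. exact Hdiff.
  intros K. eapply Rle_trans. apply norm_sum_n_C.
  apply Rle_trans with (sum_n (fun k => (C0 * Cmod u ^ 2 / rho) * s ^ k) K).
  { apply sum_n_m_le. intros k.
    change (plus (pow_n y (S k) * a (S k) - pow_n z (S k) * a (S k))%C
       (opp (scal u (scal (pow_n z k) (RtoC (INR (S k)) * a (S k))%C))))
      with ((pow_n y (S k) * a (S k) - pow_n z (S k) * a (S k)) - u * (pow_n z k * (RtoC (INR (S k)) * a (S k))))%C.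
    assert (Heq : @eq C ((pow_n y (S k) * a (S k) - pow_n z (S k) * a (S k)) - u * (pow_n z k * (RtoC (INR (S k)) * a (S k))))%C
      (a (S k) * Eterm y z k)%C) by (unfold u; apply Eterm_eq).
    rewrite Heq.
    rewrite Cmod_mult.
    pose proof (Eterm_bound y z rho k ltac:(lra) Hyr ltac:(lra)) as HE.
    pose proof (HC0 k rho ltac:(lra)) as Hc.
    assert (0 < rho) by lra.
    assert (HE' : Cmod (Eterm y z k) <= INR k ^ 2 * rho ^ k * Cmod u ^ 2 / rho).
    { apply (Rmult_le_reg_l rho). lra. fold u in HE. 
      replace (rho * (INR k ^ 2 * rho ^ k * Cmod u ^ 2 / rho)) with (INR k ^ 2 * rho ^ k * Cmod u ^ 2) by (field; lra). lra. }
    assert (INR k ^ 2 <= INR (S k) ^ 2).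
    { rewrite S_INR. pose proof (pos_INR k). nra. }
    assert (0 <= Cmod (a (S k))) by apply Cmod_ge_0.
    assert (0 <= rho ^ k) by (apply pow_le; lra).
    assert (0 <= Cmod u ^ 2 / rho) by (apply Rdiv_le_0_compat; [nra|lra]).
    apply Rle_trans with (Cmod (a (S k)) * (INR (S k) ^ 2 * rho ^ k * (Cmod u ^ 2 / rho))).
    { apply Rmult_le_compat_l. lra. eapply Rle_trans. exact HE'. 
      replace (INR k ^ 2 * rho ^ k * Cmod u ^ 2 / rho) with (INR k ^ 2 * (rho ^ k * (Cmod u ^ 2 / rho))) by (field; lra).
      replace (INR (S k) ^ 2 * rho ^ k * (Cmod u ^ 2 / rho)) with (INR (S k) ^ 2 * (rho ^ k * (Cmod u ^ 2 / rho))) by ring.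
      apply Rmult_le_compat_r. apply Rmult_le_pos; lra. exact H0. }
    replace (Cmod (a (S k)) * (INR (S k) ^ 2 * rho ^ k * (Cmod u ^ 2 / rho)))
      with ((INR (S k) ^ 2 * Cmod (a (S k)) * rho ^ k) * (Cmod u ^ 2 / rho)) by ring.
    replace (C0 * Cmod u ^ 2 / rho * s ^ k) with ((C0 * s ^ k) * (Cmod u ^ 2 / rho)) by (field; lra).
    apply Rmult_le_compat_r. lra. exact Hc. }
  replace (sum_n (fun k => C0 * Cmod u ^ 2 / rho * s ^ k) K) with ((C0 * Cmod u ^ 2 / rho) * sum_n (fun k => s ^ k) K)
    by (symmetry; apply (sum_n_mult_l (K := R_Ring) (C0 * Cmod u ^ 2 / rho) (fun k => s ^ k) K)).
  pose proof (sum_geom_bound s K Hs) as Hg.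
  change (norm (minus y z)) with (Cmod u).
  assert (Hr0 : 0 < rho) by lra.
  assert (Hcu : 0 <= C0 * Cmod u ^ 2 / rho).
  { apply Rdiv_le_0_compat; [apply Rmult_le_pos; [lra| apply pow_le, Cmod_ge_0]|lra]. }
  apply Rle_trans with ((C0 * Cmod u ^ 2 / rho) * (1 / (1 - s))).
  { apply Rmult_le_compat_l; lra. }
  pose proof (Cmod_ge_0 u) as Hu0.
  pose proof (cond_pos eps) as He.
  assert (Hu3 : Cmod u * (C0 + 1) <= eps * rho * (1 - s)).
  { apply (Rmult_le_compat_r (C0 + 1)) in Hu2; [|lra].
    replace (eps * rho * (1 - s) / (C0 + 1) * (C0 + 1)) with (eps * rho * (1 - s)) in Hu2 by (field; lra). lra. }
  replace (C0 * Cmod u ^ 2 / rho * (1 / (1 - s))) with (Cmod u * (C0 * Cmod u) / (rho * (1 - s))) by (field; lra).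
  apply (Rmult_le_reg_r (rho * (1 - s))). nra.
  replace (Cmod u * (C0 * Cmod u) / (rho * (1 - s)) * (rho * (1 - s))) with (Cmod u * (C0 * Cmod u)) by (field; nra).
  assert (Cmod u * (C0 * Cmod u) <= Cmod u * (eps * rho * (1 - s))).
  { apply Rmult_le_compat_l. lra. nra. }
  change (norm u) with (Cmod u). replace (eps * Cmod u * (rho * (1 - s))) with (Cmod u * (eps * rho * (1 - s))) by ring. lra.
Qed.


Lemma pow_n_Cmult (x y : C) (k : nat) : pow_n (x * y)%C k = (pow_n x k * pow_n y k)%C.
Proof.
  induction k as [|k IH]; simpl.
  - change (one : C) with (RtoC 1). cring.
  - change (mult (x * y)%C (pow_n (x * y)%C k) = (mult x (pow_n x k) * mult y (pow_n y k))%C).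
    rewrite IH. change mult with Cmult. cring.
Qed.

Lemma pow_n_pow_n (x : C) (a b : nat) : pow_n (pow_n x a) b = pow_n x (a * b).
Proof.
  induction b as [|b IH].
  - rewrite Nat.mul_0_r. reflexivity.
  - replace (a * S b)%nat with (a + a * b)%nat by lia. rewrite pow_n_plus, <- IH. reflexivity.
Qed.

Lemma pow_n_one (k : nat) : pow_n (RtoC 1) k = RtoC 1.
Proof.
  induction k as [|k IH]; simpl. reflexivity.
  change (mult (RtoC 1) (pow_n (RtoC 1) k) = RtoC 1). rewrite IH. change mult with Cmult. cring.
Qed.

Definition om (N : nat) : C := (cos (2 * PI / INR N), sin (2 * PI / INR N)).

Lemma om_pow (N m : nat) : pow_n (om N) m = (cos (INR m * (2 * PI / INR N)), sin (INR m * (2 * PI / INR N))).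
Proof.
  induction m as [|m IH].
  - simpl. rewrite Rmult_0_l, cos_0, sin_0. reflexivity.
  - change (pow_n (om N) (S m)) with (om N * pow_n (om N) m)%C. rewrite IH. unfold om.
    rewrite S_INR. set (t := 2 * PI / INR N).
    replace ((INR m + 1) * t) with (t + INR m * t) by ring.
    rewrite cos_plus, sin_plus. unfold Cmult. simpl. f_equal; ring.
Qed.

Lemma Cmod_om_pow (N m : nat) : Cmod (pow_n (om N) m) = 1.
Proof.
  rewrite om_pow. unfold Cmod. simpl. rewrite Rmult_1_r, Rmult_1_r.
  rewrite <- (Rsqr_def (cos _)), <- (Rsqr_def (sin _)). rewrite Rplus_comm, sin2_cos2. apply sqrt_1.
Qed.

Lemma om_pow_N (N : nat) : (1 <= N)%nat -> pow_n (om N) N = RtoC 1.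
Proof.
  intros HN. rewrite om_pow. assert (0 < INR N) by (apply lt_0_INR; lia).
  replace (INR N * (2 * PI / INR N)) with (2 * PI) by (field; lra).
  rewrite cos_2PI, sin_2PI. reflexivity.
Qed.

Lemma om_pow_ne1 (N e : nat) : (0 < e < 2 * N)%nat -> e <> N -> pow_n (om N) e <> RtoC 1.
Proof.
  intros He HeN Heq. rewrite om_pow in Heq.
  assert (HN : 0 < INR N) by (apply lt_0_INR; lia).
  injection Heq as Hc Hs.
  destruct (sin_eq_0_0 _ Hs) as [k Hk].
  assert (Hk2 : IZR k = 2 * INR e / INR N).
  { apply (Rmult_eq_reg_r PI). rewrite <- Hk. field. lra. pose proof PI_RGT_0. lra. }
  assert (He1 : 0 < INR e) by (apply lt_0_INR; lia).
  assert (He2 : INR e < 2 * INR N).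
  { replace 2 with (INR 2) by reflexivity. rewrite <- mult_INR. apply lt_INR. lia. }
  assert (0 < IZR k < 4).
  { rewrite Hk2. split. apply Rdiv_lt_0_compat; lra.
    apply (Rmult_lt_reg_r (INR N)). lra. field_simplify; lra. }
  destruct H as [Hk0 Hk4]. apply lt_IZR in Hk0. apply lt_IZR in Hk4.
  assert (k = 1 \/ k = 2 \/ k = 3)%Z as Hcases by lia.
  destruct Hcases as [-> | [-> | ->]].
  - rewrite Hk in Hc. rewrite Rmult_1_l, cos_PI in Hc. lra.
  - apply HeN. apply INR_eq. 
    pose proof PI_RGT_0.
    apply (Rmult_eq_reg_r (2 * PI / INR N)). rewrite Hk. field. lra.
    apply Rgt_not_eq. apply Rdiv_lt_0_compat; lra.
  - rewrite Hk in Hc. replace (IZR 3 * PI) with (PI + 2 * INR 1 * PI) in Hc by (simpl; ring).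
    rewrite cos_period, cos_PI in Hc. lra.
Qed.

Lemma geom_C (w : C) (n : nat) :
  ((w - 1) * sum_n (fun m => pow_n w m) n = pow_n w (S n) - 1)%C.
Proof.
  induction n as [|n IH].
  - rewrite sum_O. simpl. change (one : C) with (RtoC 1). change (mult w (RtoC 1)) with (w * 1)%C. ring.
  - rewrite sum_Sn. change plus with Cplus.
    replace ((w - 1) * (sum_n (fun m => pow_n w m) n + pow_n w (S n)))%C
      with ((w - 1) * sum_n (fun m => pow_n w m) n + (w - 1) * pow_n w (S n))%C by ring.
    rewrite IH. change (pow_n w (S (S n))) with (w * pow_n w (S n))%C. ring.
Qed.

Lemma geom_C_zero (w : C) (N : nat) : pow_n w N = RtoC 1 -> w <> RtoC 1 -> (1 <= N)%nat ->
  sum_n (fun m => pow_n w m) (N - 1) = RtoC 0.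
Proof.
  intros HN Hw H1. pose proof (geom_C w (N - 1)) as G.
  replace (S (N - 1)) with N in G by lia. rewrite HN in G.
  replace (RtoC 1 - 1)%C with (RtoC 0) in G by ring.
  assert (Hw1 : (w - 1)%C <> RtoC 0) by (apply Cminus_eq_contra; exact Hw).
  set (S0 := sum_n (fun m => pow_n w m) (N - 1)) in *.
  replace S0 with (/ (w - 1) * ((w - 1) * S0))%C.
  rewrite G. cring.
  change (@eq C (/ (w - 1) * ((w - 1) * S0))%C S0).
  rewrite Cmult_assoc, Cinv_l by exact Hw1. cring.
Qed.


Lemma is_series_sum_n (f : nat -> nat -> C) (L : nat -> C) (M : nat) :
  (forall m, is_series (f m) (L m)) ->
  is_series (fun k => sum_n (fun m => f m k) M) (sum_n L M).
Proof.
  intros H. induction M as [|M IH].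
  - rewrite sum_O. eapply is_series_ext; [|apply (H 0%nat)]. intros k. rewrite sum_O. reflexivity.
  - rewrite sum_Sn. eapply is_series_ext; [|apply (is_series_plus _ _ _ _ IH (H (S M)))].
    intros k. simpl. rewrite sum_Sn. reflexivity.
Qed.

Lemma is_series_finite (d : nat -> C) (K : nat) :
  (forall k, (K < k)%nat -> d k = RtoC 0) -> is_series d (sum_n d K).
Proof.
  intros H. unfold is_series.
  apply (filterlim_ext_loc (fun _ => sum_n d K)).
  - exists K. intros n Hn. induction n as [|n IH].
    + assert (K = 0%nat) by lia. subst. reflexivity.
    + destruct (Nat.eq_dec K (S n)) as [->|Hne]. reflexivity.
      rewrite sum_Sn, <- IH by lia. rewrite H by lia. symmetry. apply (plus_zero_r (G := C_AbelianGroup)).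
  - apply filterlim_const.
Qed.

Lemma sum_n_indic (j : nat) (v : C) :
  sum_n (fun k => if Nat.eqb k j then v else RtoC 0) j = v.
Proof.
  assert (H0 : forall K, (K < j)%nat -> sum_n (fun k => if Nat.eqb k j then v else RtoC 0) K = RtoC 0).
  { induction K as [|K IH]; intros HK.
    - rewrite sum_O. destruct (Nat.eqb_spec 0 j). lia. reflexivity.
    - rewrite sum_Sn, IH by lia. destruct (Nat.eqb_spec (S K) j). lia. change (@eq C (0 + 0)%C 0). ring. }
  destruct j as [|j].
  - rewrite sum_O. reflexivity.
  - rewrite sum_Sn, H0 by lia. rewrite Nat.eqb_refl. change (@eq C (0 + v)%C v). ring.
Qed.

Lemma sum_n_const_C (n : nat) : sum_n (fun _ => RtoC 1) n = RtoC (INR (S n)).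
Proof.
  induction n as [|n IH].
  - rewrite sum_O. reflexivity.
  - rewrite sum_Sn, IH. rewrite (S_INR (S n)), RtoC_plus. reflexivity.
Qed.

Lemma bernoulli (h : R) (n : nat) : 0 <= h <= 1 -> 1 - INR n * h <= (1 - h) ^ n.
Proof.
  intros Hh. induction n as [|n IH].
  - simpl. lra.
  - rewrite S_INR. simpl.
    assert (0 <= INR n * h * h) by (apply Rmult_le_pos; [apply Rmult_le_pos; [apply pos_INR|lra]|lra]).
    assert ((1 - h) * (1 - INR n * h) <= (1 - h) * (1 - h) ^ n) by (apply Rmult_le_compat_l; lra).
    nra.
Qed.

Lemma pow_tail_le (t : R) (N k : nat) : 0 <= t <= 1 -> (N <= k)%nat -> t ^ k <= t ^ N.
Proof.
  intros Ht Hk. replace k with (N + (k - N))%nat by lia. rewrite pow_add.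
  assert (0 <= t ^ N) by (apply pow_le; lra).
  assert (t ^ (k - N) <= 1) by (rewrite <- (pow1 (k - N)); apply pow_incr; lra).
  assert (0 <= t ^ (k - N)) by (apply pow_le; lra). nra.
Qed.


Lemma pow_n_RtoC (x : R) (k : nat) : pow_n (RtoC x) k = RtoC (x ^ k).
Proof.
  induction k as [|k IH]. reflexivity.
  change (pow_n (RtoC x) (S k)) with (RtoC x * pow_n (RtoC x) k)%C. rewrite IH.
  simpl. rewrite RtoC_mult. reflexivity.
Qed.

Lemma avg_term (N j k m : nat) (rho : R) (bk : C) : (j < N)%nat ->
  (RtoC (/ INR N) * pow_n (pow_n (om N) m) (N - j) * (pow_n (RtoC rho * pow_n (om N) m)%C k * bk))%C
  = (RtoC (/ INR N) * RtoC (rho ^ k) * bk * pow_n (pow_n (om N) (k + N - j)) m)%C.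
Proof.
  intros Hj. rewrite pow_n_Cmult, pow_n_RtoC.
  rewrite (pow_n_pow_n (om N) (k + N - j) m).
  replace ((k + N - j) * m)%nat with (m * k + m * (N - j))%nat by nia.
  rewrite pow_n_plus, <- !pow_n_pow_n. change mult with Cmult. cring.
Qed.

Lemma cauchy_est (b : nat -> C) (G : C -> C) (M : R) :
  (forall w, Cmod w < 1 -> is_pseries b w (G w)) ->
  (forall w, Cmod w < 1 -> Cmod (G w) <= M) ->
  forall j, Cmod (b j) <= M.
Proof.
  intros HG HM j.
  destruct (Rle_lt_dec (Cmod (b j)) M) as [h|Hbig]; [exact h|exfalso].
  assert (HM0 : 0 <= M).
  { pose proof (HM (RtoC 0) ltac:(rewrite Cmod_0; lra)). pose proof (Cmod_ge_0 (G (RtoC 0))). lra. }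
  set (beta := Cmod (b j)) in *.
  set (theta := M / beta).
  assert (Hth : 0 <= theta < 1).
  { unfold theta. split. apply Rdiv_le_0_compat; lra.
    apply (Rmult_lt_reg_r beta). lra. field_simplify; lra. }
  set (h := (1 - theta) / (2 * (INR j + 1))).
  assert (Hj0 : 0 <= INR j) by apply pos_INR.
  assert (Hh : 0 <= h <= 1).
  { unfold h. split. apply Rdiv_le_0_compat; lra.
    apply (Rmult_le_reg_r (2 * (INR j + 1))). lra. field_simplify; nra. }
  set (rho0 := 1 - h).
  assert (Hr0 : theta < rho0 ^ j).
  { pose proof (bernoulli h j Hh).
    assert (INR j * h < 1 - theta).
    { unfold h. apply (Rmult_lt_reg_r (2 * (INR j + 1))). lra. field_simplify; nra. }
    unfold rho0. lra. }
  set (tau := (2 + rho0) / 3).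
  assert (Hhpos : 0 < h) by (unfold h; apply Rdiv_lt_0_compat; lra).
  assert (Htau : 0 < tau < 1) by (unfold tau, rho0; lra).
  set (rho := tau ^ 3).
  assert (Hrho : rho0 <= rho).
  { unfold rho. assert (E3 : tau ^ 3 - rho0 = (1 - rho0) ^ 2 * (rho0 + 8) / 27) by (unfold tau; field).
    assert (0 <= (1 - rho0) ^ 2 * (rho0 + 8) / 27).
    { apply Rdiv_le_0_compat; [apply Rmult_le_pos; [apply pow_le|]|]; unfold rho0; nra. }
    lra. }
  assert (Hrho1 : 0 < rho < 1).
  { unfold rho. split. apply pow_lt; lra. simpl. assert (tau * tau < 1) by nra. nra. }
  assert (Hgap : M < beta * rho ^ j).
  { assert (rho0 ^ j <= rho ^ j) by (apply pow_incr; split; [unfold rho0; lra | exact Hrho]).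
    assert (M = beta * theta) by (unfold theta; field; lra).
    assert (beta * theta < beta * rho0 ^ j) by (apply Rmult_lt_compat_l; lra).
    assert (beta * rho0 ^ j <= beta * rho ^ j) by (apply Rmult_le_compat_l; lra). lra. }
  set (gap := beta * rho ^ j - M).
  destruct (terms_bounded _ _ (HG (RtoC tau) ltac:(rewrite Cmod_R, Rabs_pos_eq; lra))) as [B HB].
  assert (HbB : forall k, Cmod (b k) * tau ^ k <= B).
  { intros k. specialize (HB k). change (scal (pow_n (RtoC tau) k) (b k)) with (pow_n (RtoC tau) k * b k)%C in HB.
    rewrite Cmod_mult, Cmod_pow_n, Cmod_R, Rabs_pos_eq in HB by lra. lra. }
  assert (HB0 : 0 <= B).
  { pose proof (HbB 0%nat). simpl in H. pose proof (Cmod_ge_0 (b 0%nat)). lra. }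
  assert (Heps : 0 < gap * (1 - tau) / (B + 1)).
  { apply Rdiv_lt_0_compat. apply Rmult_lt_0_compat; unfold gap; lra. lra. }
  destruct (pow_lt_1_zero tau ltac:(rewrite Rabs_pos_eq; lra) _ Heps) as [N0 HN0].
  set (N := Nat.max N0 (S j)).
  assert (HN1 : (j < N)%nat) by (unfold N; lia).
  assert (HtN : tau ^ N < gap * (1 - tau) / (B + 1)).
  { specialize (HN0 N ltac:(unfold N; lia)). rewrite Rabs_pos_eq in HN0 by (apply pow_le; lra). exact HN0. }
  assert (HNpos : 0 < INR N) by (apply lt_0_INR; lia).
  set (zm := fun m => (RtoC rho * pow_n (om N) m)%C).
  assert (Hzm : forall m, Cmod (zm m) = rho).
  { intros m. unfold zm. rewrite Cmod_mult, Cmod_om_pow, Cmod_R, Rabs_pos_eq; lra. }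
  set (cm := fun m => (RtoC (/ INR N) * pow_n (pow_n (om N) m) (N - j))%C).
  assert (Hcm : forall m, Cmod (cm m) = / INR N).
  { intros m. unfold cm. rewrite Cmod_mult, pow_n_pow_n, Cmod_om_pow, Cmod_R, Rabs_pos_eq.
    ring. apply Rlt_le, Rinv_0_lt_compat; lra. }
  set (A := sum_n (fun m => (cm m * G (zm m))%C) (N - 1)).
  set (T := fun k => sum_n (fun m => (cm m * (pow_n (zm m) k * b k))%C) (N - 1)).
  assert (HT : is_series T A).
  { apply is_series_sum_n. intros m.
    pose proof (is_series_scal (K := C_AbsRing) (cm m) _ _ (HG (zm m) ltac:(rewrite Hzm; lra))) as Hs.
    exact Hs. }
  assert (HA : Cmod A <= M).
  { unfold A. eapply Rle_trans. apply norm_sum_n_C.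
    apply Rle_trans with (sum_n (fun _ => / INR N * M) (N - 1)).
    { apply sum_n_m_le. intros m. rewrite Cmod_mult, Hcm.
      apply Rmult_le_compat_l. apply Rlt_le, Rinv_0_lt_compat; lra. apply HM. rewrite Hzm. lra. }
    rewrite sum_n_const. replace (S (N - 1)) with N by lia. apply Req_le. field. lra. }
  assert (HTk : forall k, T k = (RtoC (/ INR N) * RtoC (rho ^ k) * b k * sum_n (fun m => pow_n (pow_n (om N) (k + N - j)) m) (N - 1))%C).
  { intros k. unfold T. rewrite <- (sum_n_mult_l (K := C_Ring)). apply sum_n_ext. intros m.
    unfold cm, zm. rewrite avg_term by exact HN1. reflexivity. }
  assert (HTj : T j = (RtoC (rho ^ j) * b j)%C).
  { rewrite HTk. replace (j + N - j)%nat with N by lia.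
    rewrite (om_pow_N N ltac:(lia)).
    rewrite (sum_n_ext _ (fun _ => RtoC 1)) by (intros; apply pow_n_one).
    rewrite sum_n_const_C. replace (S (N - 1)) with N by lia.
    replace (RtoC (/ INR N) * RtoC (rho ^ j) * b j * RtoC (INR N))%C with (RtoC (/ INR N * INR N) * RtoC (rho ^ j) * b j)%C by (rewrite RtoC_mult; cring).
    rewrite Rinv_l by lra. cring. }
  assert (HTz : forall k, (k < N)%nat -> k <> j -> T k = RtoC 0).
  { intros k Hk Hkj. rewrite HTk.
    rewrite (geom_C_zero (pow_n (om N) (k + N - j)) N).
    - cring.
    - rewrite pow_n_pow_n. replace ((k + N - j) * N)%nat with (N * (k + N - j))%nat by lia.
      rewrite <- pow_n_pow_n, om_pow_N by lia. apply pow_n_one.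
    - apply om_pow_ne1; lia.
    - lia. }
  assert (HTb : forall k, Cmod (T k) <= rho ^ k * Cmod (b k)).
  { intros k. rewrite HTk. rewrite !Cmod_mult, !Cmod_R.
    rewrite Rabs_pos_eq by (apply Rlt_le, Rinv_0_lt_compat; lra).
    rewrite Rabs_pos_eq by (apply pow_le; lra).
    assert (Hs : Cmod (sum_n (fun m => pow_n (pow_n (om N) (k + N - j)) m) (N - 1)) <= INR N).
    { eapply Rle_trans. apply norm_sum_n_C.
      rewrite (sum_n_ext _ (fun _ => 1)) by (intros m; rewrite pow_n_pow_n; apply Cmod_om_pow).
      rewrite sum_n_const. replace (S (N - 1)) with N by lia. lra. }
    assert (0 <= / INR N * rho ^ k * Cmod (b k)).
    { apply Rmult_le_pos. apply Rmult_le_pos. apply Rlt_le, Rinv_0_lt_compat; lra. apply pow_le; lra. apply Cmod_ge_0. }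
    apply Rle_trans with (/ INR N * rho ^ k * Cmod (b k) * INR N).
    { apply Rmult_le_compat_l; lra. }
    apply Req_le. field. lra. }
  set (ind := fun k => if Nat.eqb k j then (RtoC (rho ^ j) * b j)%C else RtoC 0).
  assert (Hind : is_series ind (RtoC (rho ^ j) * b j)%C).
  { rewrite <- (sum_n_indic j (RtoC (rho ^ j) * b j)%C). apply is_series_finite.
    intros k Hk. unfold ind. destruct (Nat.eqb_spec k j). lia. reflexivity. }
  pose proof (is_series_minus _ _ _ _ HT Hind) as Hd.
  assert (Hdb : Cmod (A - RtoC (rho ^ j) * b j)%C <= B * tau ^ N / (1 - tau)).
  { change (A - RtoC (rho ^ j) * b j)%C with (plus A (opp (RtoC (rho ^ j) * b j)%C)).
    eapply series_bound. exact Hd. intros K.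
    eapply Rle_trans. apply norm_sum_n_C.
    apply Rle_trans with (sum_n (fun k => (B * tau ^ N) * tau ^ k) K).
    { apply sum_n_m_le. intros k.
      change (Cmod (plus (T k) (opp (ind k)))) with (Cmod (T k - ind k)%C).
      unfold ind. destruct (Nat.eqb_spec k j) as [->|Hkj].
      - rewrite HTj. replace (RtoC (rho ^ j) * b j - RtoC (rho ^ j) * b j)%C with (RtoC 0) by cring.
        rewrite Cmod_0. apply Rmult_le_pos. apply Rmult_le_pos. lra. apply pow_le; lra. apply pow_le; lra.
      - destruct (Nat.lt_ge_cases k N) as [HkN|HkN].
        + rewrite HTz by assumption. replace (RtoC 0 - RtoC 0)%C with (RtoC 0) by cring.
          rewrite Cmod_0. apply Rmult_le_pos. apply Rmult_le_pos. lra. apply pow_le; lra. apply pow_le; lra.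
        + replace (T k - RtoC 0)%C with (T k) by (apply injective_projections; simpl; ring).
          eapply Rle_trans. apply HTb.
          assert (Hrk : rho ^ k = tau ^ k * tau ^ k * tau ^ k).
          { unfold rho. rewrite <- pow_mult. replace (3 * k)%nat with (k + k + k)%nat by lia. rewrite !pow_add. ring. }
          rewrite Hrk.
          assert (tau ^ k <= tau ^ N) by (apply pow_tail_le; [lra|lia]).
          assert (tau ^ k <= 1) by (rewrite <- (pow1 k); apply pow_incr; lra).
          assert (0 <= tau ^ k) by (apply pow_le; lra).
          pose proof (HbB k). pose proof (Cmod_ge_0 (b k)).
          assert (Cmod (b k) * tau ^ k * tau ^ k * tau ^ k <= B * tau ^ k * tau ^ k) by
            (apply Rmult_le_compat_r; [lra|]; apply Rmult_le_compat_r; lra).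
          assert (B * tau ^ k * tau ^ k <= B * tau ^ N * tau ^ k) by
            (apply Rmult_le_compat_r; [lra|]; apply Rmult_le_compat_l; lra).
          nra. }
    replace (sum_n (fun k => B * tau ^ N * tau ^ k) K) with ((B * tau ^ N) * sum_n (fun k => tau ^ k) K)
      by (symmetry; apply (sum_n_mult_l (K := R_Ring) (B * tau ^ N) (fun k => tau ^ k) K)).
    pose proof (sum_geom_bound tau K ltac:(lra)).
    assert (0 <= B * tau ^ N) by (apply Rmult_le_pos; [lra|apply pow_le; lra]).
    apply Rle_trans with (B * tau ^ N * (1 / (1 - tau))). apply Rmult_le_compat_l; lra.
    apply Req_le. field. lra. }
  assert (Hsmall : B * tau ^ N / (1 - tau) < gap).
  { apply (Rmult_lt_reg_r (1 - tau)). lra.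
    replace (B * tau ^ N / (1 - tau) * (1 - tau)) with (B * tau ^ N) by (field; lra).
    assert (B * tau ^ N <= B * (gap * (1 - tau) / (B + 1))) by (apply Rmult_le_compat_l; lra).
    assert (B * (gap * (1 - tau) / (B + 1)) < gap * (1 - tau)).
    { apply (Rmult_lt_reg_r (B + 1)). lra.
      replace (B * (gap * (1 - tau) / (B + 1)) * (B + 1)) with (B * (gap * (1 - tau))) by (field; lra).
      assert (0 < gap * (1 - tau)) by (apply Rmult_lt_0_compat; unfold gap; lra). nra. }
    lra. }
  assert (Hbj : Cmod (RtoC (rho ^ j) * b j)%C = rho ^ j * beta).
  { rewrite Cmod_mult, Cmod_R, Rabs_pos_eq by (apply pow_le; lra). reflexivity. }
  assert (Htri : Cmod (RtoC (rho ^ j) * b j)%C <= Cmod A + Cmod (A - RtoC (rho ^ j) * b j)%C).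
  { replace (RtoC (rho ^ j) * b j)%C with (A - (A - RtoC (rho ^ j) * b j))%C at 1 by cring.
    unfold Cminus at 1. eapply Rle_trans. apply Cmod_triangle. rewrite Cmod_opp. lra. }
  unfold gap in *. lra.
Qed.


Definition trunc (a : nat -> C) (n : nat) (k : nat) : C := if Nat.leb k n then a k else RtoC 0.

Lemma ps_series (a : nat -> C) (n : nat) (w : C) :
  a 0%nat = RtoC 0 -> a 1%nat = RtoC 1 -> (2 <= n)%nat ->
  is_pseries (trunc a n) w (partial_sum a n w).
Proof.
  intros H0 H1 Hn. unfold is_pseries.
  replace (partial_sum a n w) with (sum_n (fun k => scal (pow_n w k) (trunc a n k)) n).
  - apply is_series_finite. intros k Hk. unfold trunc.
    destruct (Nat.leb_spec k n). lia. change (@eq C (pow_n w k * 0)%C 0). ring.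
  - unfold sum_n, partial_sum.
    rewrite sum_Sn_m by lia. rewrite sum_Sn_m by lia.
    unfold trunc at 1 2. replace (Nat.leb 0 n) with true by (symmetry; apply Nat.leb_le; lia).
    replace (Nat.leb 1 n) with true by (symmetry; apply Nat.leb_le; lia).
    rewrite H0, H1.
    rewrite (sum_n_m_ext_loc _ (fun k => (a k * pow_n w k)%C)).
    + change (@eq C (pow_n w 0 * 0 + (mult w (pow_n w 0) * 1 + sum_n_m (fun k => (a k * pow_n w k)%C) 2 n))%C
             (w + sum_n_m (fun k => (a k * pow_n w k)%C) 2 n)%C).
      simpl. change (mult w one) with (w * 1)%C. ring.
    + intros k Hk. unfold trunc. replace (Nat.leb k n) with true by (symmetry; apply Nat.leb_le; lia).
      change (@eq C (pow_n w k * a k)%C (a k * pow_n w k)%C). ring.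
Qed.

Lemma sum_n_shift_R (f : nat -> R) (K : nat) : sum_n f (S K) = f 0%nat + sum_n (fun k => f (S k)) K.
Proof.
  unfold sum_n. rewrite sum_Sn_m by lia. rewrite sum_n_m_S. reflexivity.
Qed.

Lemma Cmod_plus_opp0 (x y : C) : y = RtoC 0 -> Cmod (plus x (opp y)) = Cmod x.
Proof. intros ->. f_equal. apply injective_projections; simpl; ring. Qed.

Lemma tail_bound (d : nat -> C) (L : C) (m rho : R) :
  0 <= m -> 0 <= rho < 1 ->
  is_series d L -> d 0%nat = RtoC 0 -> (forall k, Cmod (d (S k)) <= m * rho ^ (S k)) ->
  Cmod L <= m * (rho / (1 - rho)).
Proof.
  intros Hm Hr HL H0 Hb. eapply series_bound. exact HL. intros K.
  eapply Rle_trans. apply norm_sum_n_C.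
  destruct K as [|K].
  - rewrite sum_O, H0, Cmod_0. apply Rmult_le_pos. lra. apply Rdiv_le_0_compat; lra.
  - rewrite sum_n_shift_R, H0, Cmod_0, Rplus_0_l.
    apply Rle_trans with (sum_n (fun k => (m * rho) * rho ^ k) K).
    { apply sum_n_m_le. intros k. eapply Rle_trans. apply Hb. simpl. lra. }
    replace (sum_n (fun k => (m * rho) * rho ^ k) K) with ((m * rho) * sum_n (fun k => rho ^ k) K)
      by (symmetry; apply (sum_n_mult_l (K := R_Ring) (m * rho) (fun k => rho ^ k) K)).
    pose proof (sum_geom_bound rho K Hr).
    apply Rle_trans with ((m * rho) * (1 / (1 - rho))).
    apply Rmult_le_compat_l. apply Rmult_le_pos; lra. lra.
    apply Req_le. field. lra.
Qed.

Lemma coef_bound (a : nat -> C) (f f' phi : C -> C) :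
  a 0%nat = 0%C ->
  (forall z : C, Cmod z < 1 -> is_pseries a z (f z)) ->
  (forall z : C, Cmod z < 1 -> is_derive f z (f' z)) ->
  (forall z : C, Cmod z < 1 -> Cmod (phi z) <= 1) ->
  (forall z : C, Cmod z < 1 ->
     (z * f' z - f z)%C = (/ 2 * (z * z) * phi z)%C) ->
  forall k, INR k * Cmod (a (S k)) <= 1 / 2.
Proof.
  intros Ha0 Hf Hf' Hphi Heq.
  set (b := fun k => (RtoC (INR k) * a k - a k)%C).
  assert (Hb : forall z, Cmod z < 1 -> is_pseries b z (z * f' z - f z)%C).
  { intros z Hz.
    destruct (pseries_deriv a f Hf z Hz) as [l [Hl Hd]].
    assert (El : f' z = l).
    { pose proof (is_C_derive_unique f z l Hd) as E1.
      pose proof (is_C_derive_unique f z (f' z) (Hf' z Hz)) as E2. rewrite <- E2, E1. reflexivity. }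
    rewrite El.
    pose proof (is_series_scal (K := C_AbsRing) z _ _ Hl) as Hzl.
    assert (HT : is_series (fun k => (pow_n z k * (RtoC (INR k) * a k))%C) (z * l)%C).
    { apply (is_series_decr_1 (K := C_AbsRing) (V := C_NormedModule)).
      match goal with |- is_series _ ?L => replace L with (scal z l) end.
      - eapply is_series_ext; [|exact Hzl]. intros k.
        change (@eq C (z * (pow_n z k * (RtoC (INR (S k)) * a (S k))))%C (pow_n z (S k) * (RtoC (INR (S k)) * a (S k)))%C).
        change (pow_n z (S k)) with (z * pow_n z k)%C. ring.
      - apply injective_projections; simpl; ring. }
    pose proof (is_series_minus _ _ _ _ HT (Hf z Hz)) as Hm.
    unfold is_pseries. eapply is_series_ext; [|exact Hm].
    intros k. unfold b. change (@eq C ((pow_n z k * (RtoC (INR k) * a k)) + - (pow_n z k * a k))%C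
      (pow_n z k * (RtoC (INR k) * a k - a k))%C). ring. }
  assert (HbM : forall w, Cmod w < 1 -> Cmod (w * f' w - f w)%C <= 1 / 2).
  { intros w Hw. rewrite Heq by exact Hw. rewrite !Cmod_mult, Cmod_inv, Cmod_R, Rabs_pos_eq by (try lra; intro H; injection H; lra).
    pose proof (Hphi w Hw). pose proof (Cmod_ge_0 w). pose proof (Cmod_ge_0 (phi w)).
    assert (Cmod w * Cmod w <= 1) by nra.
    assert (Cmod w * Cmod w * Cmod (phi w) <= 1) by nra. lra. }
  intros k. pose proof (cauchy_est b (fun w => (w * f' w - f w)%C) (1/2) Hb HbM (S k)) as H.
  unfold b in H. replace (RtoC (INR (S k)) * a (S k) - a (S k))%C with (RtoC (INR k) * a (S k))%C in H.
  - rewrite Cmod_mult, Cmod_R, Rabs_pos_eq in H by apply pos_INR. exact H.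
  - rewrite S_INR, RtoC_plus. ring.
Qed.

Theorem theorem2p2 (a : nat -> C) (f f' phi : C -> C) :
  a 0%nat = 0%C -> a 1%nat = 1%C ->
  (* f(z) = z + sum_{k>=2} a_k z^k on the unit disk *)
  (forall z : C, Cmod z < 1 -> is_pseries a z (f z)) ->
  (* f' is the (complex) derivative of f on the unit disk *)
  (forall z : C, Cmod z < 1 -> is_derive f z (f' z)) ->
  (* phi analytic in the disk with |phi| <= 1 *)
  holomorphic_on_disk 1 phi ->
  (forall z : C, Cmod z < 1 -> Cmod (phi z) <= 1) ->
  (* z f'(z) - f(z) = 1/2 z^2 phi(z) *)
  (forall z : C, Cmod z < 1 ->
     (z * f' z - f z)%C = (/ 2 * (z * z) * phi z)%C) ->
  forall r : R, 0 < r < 1 -> rS_equation r = 0 ->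
  forall n : nat, (2 <= n)%nat ->
    starlike_in_disk r (partial_sum a n).
Proof.
  intros Ha0 Ha1 Hf Hf' Hhol Hphi Heq r Hr Hroot n Hn.
  pose proof (root_lt_half r Hr Hroot) as Hr2.
  pose proof (coef_bound a f f' phi Ha0 Hf Hf' Hphi Heq) as Hcoef.
  set (c := trunc a n).
  assert (Hc : forall w, Cmod w < 1 -> is_pseries c w (partial_sum a n w)).
  { intros w _. apply ps_series; assumption. }
  assert (Hcb : forall k, INR k * Cmod (c (S k)) <= 1 / 2).
  { intros k. unfold c, trunc. destruct (Nat.leb (S k) n). apply Hcoef.
    rewrite Cmod_0. lra. }
  split.
  - intros z Hz. unfold in_disk in Hz.
    destruct (pseries_deriv c _ Hc z ltac:(lra)) as [l [_ Hd]]. exists l. exact Hd.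
  - intros z Hz0 Hzr.
    assert (Hz1 : Cmod z < 1) by lra.
    destruct (pseries_deriv c _ Hc z Hz1) as [l [Hl Hd]].
    set (rho := Cmod z) in *.
    set (X := partial_sum a n z).
    set (m := rho / 2 * (rho / (1 - rho))).
    assert (Hq : rho / (1 - rho) < 1).
    { apply (Rmult_lt_reg_r (1 - rho)). lra. field_simplify; lra. }
    assert (Hq0 : 0 <= rho / (1 - rho)) by (apply Rdiv_le_0_compat; lra).
    pose proof (Hc z Hz1) as Hs. unfold is_pseries in Hs.
      assert (Hs1 : is_series (fun k => (pow_n z (S k) * c (S k))%C) X).
      { apply (is_series_incr_1 (K := C_AbsRing) (V := C_NormedModule) (fun k => (pow_n z k * c k)%C)).
        match goal with |- is_series _ ?L => replace L with X end. exact Hs.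
        unfold c, trunc. simpl. rewrite Ha0. apply injective_projections; simpl; ring. }
    assert (HX : Cmod (X - z)%C <= m).
    {
      set (ind := fun k => if Nat.eqb k 0 then z else RtoC 0).
      assert (Hind : is_series ind z).
      { assert (Ei : sum_n ind 0 = z) by (apply sum_n_indic).
        assert (Hf0 : is_series ind (sum_n ind 0)).
        { apply is_series_finite. intros k Hk. unfold ind. destruct (Nat.eqb_spec k 0). lia. reflexivity. }
        rewrite Ei in Hf0. exact Hf0. }
      pose proof (is_series_minus _ _ _ _ Hs1 Hind) as Hd1.
      change (X - z)%C with (plus X (opp z)).
      eapply tail_bound; [| |exact Hd1| |].
      + lra.
      + lra.
      + unfold ind, c, trunc. replace (Nat.leb 1 n) with true by (symmetry; apply Nat.leb_le; lia). simpl.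
        rewrite Ha1. apply injective_projections; simpl; ring.
      + intros k.
        eapply Rle_trans; [apply Req_le; apply (Cmod_plus_opp0 (pow_n z (S (S k)) * c (S (S k)))%C (ind (S k))); reflexivity|].
        rewrite Cmod_mult, Cmod_pow_n. fold rho.
        pose proof (Hcb (S k)) as Hk. rewrite S_INR in Hk.
        pose proof (pos_INR k). pose proof (Cmod_ge_0 (c (S (S k)))).
        assert (Cmod (c (S (S k))) <= 1 / 2) by nra.
        assert (0 <= rho * rho ^ S k) by (apply Rmult_le_pos; [lra|apply pow_le; lra]).
        replace (rho ^ S (S k)) with (rho * rho ^ S k) by (simpl; ring).
        nra. }
    assert (HY : Cmod (z * l - X)%C <= m).
    { pose proof (is_series_scal (K := C_AbsRing) z _ _ Hl) as Hzl.
      pose proof (is_series_minus _ _ _ _ Hzl Hs1) as Hd2.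
      change (z * l - X)%C with (plus (scal z l) (opp X)).
      eapply tail_bound; [| |exact Hd2| |].
      + lra.
      + lra.
      + cbv beta. change (plus (scal z (scal (pow_n z 0) (RtoC (INR 1) * c 1%nat)%C)) (opp (pow_n z 1 * c 1%nat)%C))
          with (z * (1 * (RtoC 1 * c 1%nat)) - (z * 1) * c 1%nat)%C.
        apply injective_projections; simpl; ring.
      + intros k.
        eapply Rle_trans.
        { apply Req_le.
          apply (f_equal Cmod (x := (z * (pow_n z (S k) * (RtoC (INR (S (S k))) * c (S (S k)))) + - (pow_n z (S (S k)) * c (S (S k))))%C)
                   (y := (pow_n z (S (S k)) * RtoC (INR (S k)) * c (S (S k)))%C)).
          change (pow_n z (S (S k))) with (z * pow_n z (S k))%C. rewrite (S_INR (S k)), RtoC_plus. cring. }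
        rewrite !Cmod_mult, Cmod_pow_n, Cmod_R, Rabs_pos_eq by apply pos_INR. fold rho.
        pose proof (Hcb (S k)) as Hk.
        assert (0 <= rho * rho ^ S k) by (apply Rmult_le_pos; [lra|apply pow_le; lra]).
        replace (rho ^ S (S k)) with (rho * rho ^ S k) by (simpl; ring).
        nra. }
    assert (Hm2 : 2 * m < rho).
    { unfold m. assert (rho * (rho / (1 - rho)) < rho * 1) by (apply Rmult_lt_compat_l; lra). lra. }
    assert (HXm : rho - m <= Cmod X).
    { assert (Cmod z <= Cmod X + Cmod (X - z)%C).
      { replace z with (X + - (X - z))%C at 1 by cring. eapply Rle_trans. apply Cmod_triangle. rewrite Cmod_opp. lra. }
      fold rho in H. lra. }
    assert (HXn : X <> RtoC 0).
    { intros H0. rewrite H0, Cmod_0 in HXm. pose proof (Cmod_ge_0 (X - z)%C). lra. }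
    split. exact HXn.
    intros g' Hg'.
    rewrite <- (is_C_derive_unique _ _ _ Hg'), (is_C_derive_unique _ _ _ Hd). fold X.
    assert (E : (z * l / X)%C = (1 + (z * l - X) / X)%C).
    { change (@eq C (z * l / X)%C (1 + (z * l - X) / X)%C). field. exact HXn. }
    rewrite E.
    assert (Hw : Cmod ((z * l - X) / X)%C < 1).
    { rewrite Cmod_div by exact HXn. apply (Rmult_lt_reg_r (Cmod X)). lra.
      unfold Rdiv. rewrite Rmult_assoc, Rinv_l by lra. lra. }
    pose proof (re_le_Cmod ((z * l - X) / X)%C) as Hre.
    set (w := ((z * l - X) / X)%C) in *.
    assert (- Cmod w <= Re w) by (pose proof (Rle_abs (- Re w)); rewrite Rabs_Ropp in *; lra).
    change (0 < Re (RtoC 1) + Re w). rewrite re_RtoC. lra.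
Qed.
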